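(* Let $M$ be either the interval $[0,1]$ or the unit circle $S^1$, and let $f:M\to M$ be continuous. Then every wandering interval $J$ of $f$ satisfies $\mu(J)=0$ for every Borel probability measure $\mu$ that is an expansive measure of $f$.
   Context: $M$ carries its usual metric $d$. A wandering interval of $f$ is an interval $J\subset M$ such that $f^n(J)\cap f^m(J)=\emptyset$ for all distinct $n,m\in\{0,1,2,\dots\}$ and no point of $J$ belongs to the stable set $W^s(p)=\{x:\lim_{n\to\infty}d(f^n(x),f^n(p))=0\}$ of a periodic point $p$. A Borel probability measure $\mu$ is an expansive measure of $f$ if there is $\delta>0$ with $\mu(\Phi_\delta(x))=0$ for all $x\in M$, where $\Phi_\delta(x)=\{y\in M: d(f^i(y),f^i(x))\le\delta \ \forall i\in\{0,1,2,\dots\}\}$. *)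

(* Defs.v *)
From HB Require Import structures.
From mathcomp Require Import all_boot all_order all_algebra.
From mathcomp Require Import all_classical all_reals all_analysis.
Set Implicit Arguments. Unset Strict Implicit. Unset Printing Implicit Defensive.
Import Order.TTheory GRing.Theory Num.Theory.
Import numFieldNormedType.Exports.
Local Open Scope classical_set_scope.
Local Open Scope ring_scope.

(* The two phase spaces: M = [0,1] or M = S^1.  Both are modelled as
   subsets of the real line R:
   - Interval : M = [0,1] with d x y = |x - y|;
   - Circle   : M = [0,1) = R/Z with the usual (arc-length) metric
                d x y = min(|x-y|, 1-|x-y|). *)
Inductive phase_space := Interval | Circle.

Section Defs.
Variable R : realType.

Definition Mset (s : phase_space) : set R :=
  match s with Interval => `[0, 1] | Circle => `[0, 1[ end.

Definition dist (s : phase_space) (x y : R) : R :=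
  match s with
  | Interval => `|x - y|
  | Circle => Num.min `|x - y| (1 - `|x - y|)
  end.

Definition frac (x : R) : R := x - (Num.floor x)%:~R.

(* J is an interval of M (for the circle: an arc, i.e. the image of an
   interval of R under the covering map R -> R/Z). *)
Definition is_M_interval (s : phase_space) (J : set R) : Prop :=
  match s with
  | Interval => J `<=` `[0, 1] /\ is_interval J
  | Circle => exists I : set R, is_interval I /\ J = frac @` I
  end.

Definition cont_self_map (s : phase_space) (f : R -> R) : Prop :=
  (forall x, Mset s x -> Mset s (f x)) /\
  (forall x, Mset s x -> forall e : R, 0 < e -> exists2 del : R, 0 < del &
     forall y, Mset s y -> dist s x y < del -> dist s (f x) (f y) < e).

Definition periodic_point (s : phase_space) (f : R -> R) (p : R) : Prop :=
  Mset s p /\ exists n : nat, (0 < n)%N /\ iter n f p = p.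

Definition stable_set (s : phase_space) (f : R -> R) (p : R) : set R :=
  [set x | Mset s x /\
     (fun n : nat => dist s (iter n f x) (iter n f p)) @ \oo --> (0 : R)].

Definition wandering_interval (s : phase_space) (f : R -> R) (J : set R) : Prop :=
  is_M_interval s J /\
  (forall n m : nat, n <> m -> (iter n f @` J) `&` (iter m f @` J) = set0) /\
  (forall x, J x -> forall p, periodic_point s f p -> ~ stable_set s f p x).

Definition Phi (s : phase_space) (f : R -> R) (del x : R) : set R :=
  [set y | Mset s y /\ forall i : nat, dist s (iter i f y) (iter i f x) <= del].

(* A Borel probability measure on M is represented as a probability
   measure on the Borel sets of R giving full mass to M. *)
Definition prob_on (s : phase_space) (mu : probability R R) : Prop :=
  mu (Mset s) = 1%E.

Definition expansive_measure (s : phase_space) (f : R -> R)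
    (mu : probability R R) : Prop :=
  exists2 del : R, 0 < del & forall x, Mset s x -> mu (Phi s f del x) = 0%E.

End Defs.

(* Main.v *)
Require Import Defs.
From mathcomp Require Import all_boot all_order all_algebra.
From mathcomp Require Import all_classical all_reals all_analysis.
From mathcomp Require Import lra zify measurable_realfun.
Local Open Scope classical_set_scope.
Local Open Scope ring_scope.

Module Part1.
Set Implicit Arguments. Unset Strict Implicit. Unset Printing Implicit Defensive.
Import Order.TTheory GRing.Theory Num.Theory.

Section Aux.
Variable R : realType.
Implicit Types (s : phase_space) (x y z : R).

Lemma distCE x y : dist Circle x y = Order.min (`|x - y| : R) (1 - `|x - y|).
Proof. by []. Qed.

Lemma distIE x y : dist Defs.Interval x y = `|x - y|.
Proof. by []. Qed.

Lemma dist_le_abs s x y : dist s x y <= `|x - y|.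
Proof. by case: s; rewrite ?distCE ?distIE ?ge_min lexx. Qed.

Lemma distC s x y : dist s x y = dist s y x.
Proof. by case: s; rewrite ?distCE ?distIE distrC. Qed.

Ltac abs_split u := let h := fresh in have [h|h] := leP 0 u;
  [rewrite ?(ger0_norm h) | rewrite ?(ltr0_norm h)].

Lemma dist_tri s x y z : Mset s x -> Mset s y -> Mset s z ->
  dist s x z <= dist s x y + dist s y z.
Proof.
case: s; rewrite ?distCE ?distIE /=.
  move=> *; rewrite -[x - z](subrKA y); exact: ler_normD.
rewrite !in_itv /= => /andP[x0 x1] /andP[y0 y1] /andP[z0 z1].
abs_split (x - y); abs_split (y - z); abs_split (x - z);
rewrite /Order.min;
case: ifPn => h1; case: ifPn => h2; case: ifPn => h3; rewrite -?leNgt in h1 h2 h3; lra.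
Qed.
End Aux.

End Part1.
Import Part1.

Module Part2.
Set Implicit Arguments. Unset Strict Implicit. Unset Printing Implicit Defensive.
Import Order.TTheory GRing.Theory Num.Theory.

Section Aux2.
Variable R : realType.
Implicit Types (s : phase_space) (x y z : R).

Ltac abs_split u := let h := fresh in have [h|h] := leP 0 u;
  [rewrite ?(ger0_norm h) | rewrite ?(ltr0_norm h)].

Lemma frac_itv x : 0 <= Defs.frac x < 1.
Proof.
rewrite /Defs.frac; have /andP[h1 h2] := Num.Theory.floor_itv x; rewrite intrD in h2.
apply/andP; split; lra.
Qed.

Lemma frac_M x : Mset Circle (Defs.frac x).
Proof. by rewrite /= in_itv /= frac_itv. Qed.

Lemma dist_frac (a t : R) : dist Circle (Defs.frac a) (Defs.frac t) <= `|a - t|.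
Proof.
rewrite distCE.
have /andP[a1 a2] := frac_itv a; have /andP[b1 b2] := frac_itv t.
have E : Defs.frac a - Defs.frac t = (a - t) - ((Num.floor a - Num.floor t)%:~R).
  rewrite /Defs.frac intrB; lra.
move: E a1 a2 b1 b2; rewrite /Defs.frac.
set m := (Num.floor a - Num.floor t).
have [m1|m1] : (m <= -2)%R \/ (-2 < m)%R by case: (leP m (-2)); auto.
  have : (m%:~R <= (-2)%:~R :> R) by rewrite ler_int.
  move=> hm E *; abs_split (a - t); abs_split (Defs.frac a - Defs.frac t); rewrite /Defs.frac in E *;
  rewrite /Order.min; case: ifPn => h1; rewrite -?leNgt in h1; lra.
have [m2|m2] : (2 <= m)%R \/ (m < 2)%R by case: (leP 2 m); auto.
  have : ((2%:~R :> R) <= m%:~R) by rewrite ler_int.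
  move=> hm E *; abs_split (a - t); abs_split (Defs.frac a - Defs.frac t); rewrite /Defs.frac in E *;
  rewrite /Order.min; case: ifPn => h1; rewrite -?leNgt in h1; lra.
have : m = -1 \/ m = 0 \/ m = 1 by lia.
case=> [->|[->|->]] E *; abs_split (a - t); abs_split (Defs.frac a - Defs.frac t); rewrite /Defs.frac in E *;
  rewrite /Order.min; case: ifPn => h1; rewrite -?leNgt in h1; lra.
Qed.

Variables (s : phase_space) (f : R -> R).
Hypothesis hf : cont_self_map s f.

Lemma iter_M n x : Mset s x -> Mset s (iter n f x).
Proof. by move=> Mx; elim: n => //= n IH; apply: hf.1. Qed.

Lemma iter_cont n x : Mset s x -> forall e, 0 < e -> exists2 d, 0 < d &
  forall y, Mset s y -> dist s x y < d -> dist s (iter n f x) (iter n f y) < e.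
Proof.
move=> Mx; elim: n => [|n IH] e e0 /=; first by exists e.
have [d1 d10 H1] := hf.2 _ (iter_M n Mx) e e0.
have [d d0 H] := IH d1 d10.
exists d => // y My xy; apply: H1; [exact: iter_M | exact: H].
Qed.
End Aux2.

End Part2.
Import Part2.

Module Part3.
Set Implicit Arguments. Unset Strict Implicit. Unset Printing Implicit Defensive.
Import Order.TTheory GRing.Theory Num.Theory.
Import numFieldNormedType.Exports.

Section Aux3.
Variable R : realType.

Lemma cont_within_ed (A : set R) (g : R -> R) :
  (forall x, A x -> forall e, 0 < e -> exists2 d, 0 < d &
     forall y, A y -> `|x - y| < d -> `|g x - g y| < e) ->
  {within A, continuous g}.
Proof.
move=> H; apply/subspace_continuousP => x Ax.
apply/cvgrPdist_lt => e e0; have [d d0 Hd] := H x Ax e e0.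
rewrite /within; exists d => //= y /= xy Ay; exact: Hd.
Qed.

Lemma grid_ivt (K : nat) (g : R -> R) (a b : R) : (0 < K)%N -> a <= b ->
  {within `[a, b], continuous g} -> 0 <= g a <= 1 -> 0 <= g b <= 1 ->
  K%:R^-1 < `|g a - g b| ->
  exists i, (i < K.+1)%N /\ exists2 c, c \in `[a, b] & g c = i%:R / K%:R.
Proof.
move=> K0 ab gc /andP[ga0 ga1] /andP[gb0 gb1] gab.
set lo := Num.min (g a) (g b); set hi := Num.max (g a) (g b).
have Kp : 0 < (K%:R : R) by rewrite ltr0n.
set w := (K%:R : R)^-1 in gab *.
have Kw : K%:R * w = 1 by rewrite /w mulfV // gt_eqF.
have w0 : 0 < w by rewrite /w invr_gt0.
have [lo0 hi1 hl] : [/\ 0 <= lo, hi <= 1 & w < hi - lo].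
  rewrite /lo /hi /Order.min /Order.max; case: ltP => h;
  (have [h'|h'] := leP 0 (g a - g b);
   [rewrite (ger0_norm h') in gab | rewrite (ltr0_norm h') in gab]); split; lra.
have Klo : 0 <= K%:R * lo by rewrite mulr_ge0 // ltW.
have /andP[k1 k2] := Num.Theory.truncn_itv Klo.
set k := Num.truncn (K%:R * lo) in k1 k2.
have kK : (k < K)%N.
  rewrite -(ltr_nat R); nra.
exists k.+1; split; first by [].
apply: IVT => //; rewrite -/lo -/hi -/w.
apply/andP; split; nra.
Qed.
End Aux3.

End Part3.
Import Part3.

Module Part4.
Set Implicit Arguments. Unset Strict Implicit. Unset Printing Implicit Defensive.
Import Order.TTheory GRing.Theory Num.Theory.

Lemma fin_bound (K : nat) (P : nat -> nat -> Prop) :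
  (forall i n m, (i < K)%N -> P i n -> P i m -> n = m) ->
  exists N, forall i n, (i < K)%N -> P i n -> (n < N)%N.
Proof.
elim: K => [|K IH] H; first by exists 0%N.
have [N0 HN0] : exists N, forall i n, (i < K)%N -> P i n -> (n < N)%N.
  by apply: IH => i n m iK; apply: H; lia.
have [[n0 Pn0]|nP] := pselect (exists n, P K n).
  exists (maxn N0 n0.+1) => i n iK Pin.
  have [iK'|iK'] : (i < K)%N \/ i = K by lia.
    by have := HN0 _ _ iK' Pin; lia.
  subst i; have := H K n n0 (ltnSn K) Pin Pn0; lia.
exists N0 => i n iK Pin.
have [iK'|iK'] : (i < K)%N \/ i = K by lia.
  exact: HN0 Pin.
by subst i; exfalso; apply: nP; exists n.
Qed.

Section Loc.
Variable R : realType.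

Definition sball (x d : R) : set R := [set y | `|x - y| < d].

Lemma sball_meas x d : measurable (sball x d).
Proof.
apply: is_interval_measurable => y1 y2; rewrite /sball /= => h1 h2 z /andP[z1 z2].
move: h1 h2; have [h|h] := leP 0 (x - y1); [rewrite (ger0_norm h)|rewrite (ltr0_norm h)];
have [h'|h'] := leP 0 (x - y2); [rewrite (ger0_norm h')|rewrite (ltr0_norm h')|rewrite (ger0_norm h')|rewrite (ltr0_norm h')];
have [h''|h''] := leP 0 (x - z); [rewrite (ger0_norm h'')|rewrite (ltr0_norm h'')|rewrite (ger0_norm h'')|rewrite (ltr0_norm h'')|rewrite (ger0_norm h'')|rewrite (ltr0_norm h'')|rewrite (ger0_norm h'')|rewrite (ltr0_norm h'')]; lra.
Qed.

Lemma loc_null (mu : {measure set R -> \bar R}) (A : set R) :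
  measurable A ->
  (forall x, A x -> exists2 d, 0 < d & mu (A `&` sball x d) = 0%E) ->
  mu A = 0%E.
Proof.
move=> mA H.
pose F (k : nat) : set R :=
  match unpickle k with
  | Some (q, n) => if pselect (mu (A `&` sball (ratr q) n.+1%:R^-1) = 0%E)
                   then A `&` sball (ratr q) n.+1%:R^-1 else set0
  | None => set0 end.
have mF k : measurable (F k).
  rewrite /F; case: (unpickle k) => [[q n]|] //.
  destruct (pselect _) => /=; [exact: measurableI mA (sball_meas _ _) | exact: measurable0].
have F0 k : mu (F k) = 0%E.
  rewrite /F; case: (unpickle k) => [[q n]|] //; destruct (pselect _) => //=; exact: measure0.
have AF : A `<=` \bigcup_k F k.
  move=> x Ax; have [d d0 Hd] := H x Ax.
  have d20 : 0 <= 2 / d by rewrite divr_ge0 // ltW.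
  have := Num.Theory.truncn_itv d20; set n := Num.truncn _ => /andP[_ n2].
  have n0 : (0 : R) < n.+1%:R by rewrite ltr0n.
  set r := (n.+1%:R : R)^-1.
  have r0 : 0 < r by rewrite invr_gt0.
  have nr : n.+1%:R * r = 1 by rewrite /r mulfV // gt_eqF.
  have rd : r < d / 2.
    rewrite /r -[d / 2]invf_div ltf_pV2 ?posrE // divr_gt0 //.
  have xr : x - r < x + r by lra.
  have [q] := rat_in_itvoo xr; rewrite in_itv /= => /andP[q1 q2].
  exists (pickle (q, n)); first exact: I.
  rewrite /F pickleK -/r.
  destruct (pselect _) as [e|ne] => /=.
    split => //; rewrite /sball /=.
    have [h|h] := leP 0 (ratr q - x); [rewrite (ger0_norm h)|rewrite (ltr0_norm h)]; lra.
  exfalso; apply: ne; apply: (subset_measure0 _ _ _ Hd).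
  - exact: measurableI mA (sball_meas _ _).
  - exact: measurableI mA (sball_meas _ _).
  move=> y [Ay]; rewrite /sball /= => qy; split => //.
  have [h|h] := leP 0 (ratr q - y); [rewrite (ger0_norm h) in qy|rewrite (ltr0_norm h) in qy];
  have [h'|h'] := leP 0 (x - y); [rewrite (ger0_norm h')|rewrite (ltr0_norm h')|rewrite (ger0_norm h')|rewrite (ltr0_norm h')]; lra.
apply/eqP; rewrite -measure_le0.
apply: (le_trans (measure_sigma_subadditive mu mF mA AF)).
by rewrite eseries0 // => i _ _; exact: F0.
Qed.
End Loc.

End Part4.
Import Part4.

Module Part5.
Set Implicit Arguments. Unset Strict Implicit. Unset Printing Implicit Defensive.
Import Order.TTheory GRing.Theory Num.Theory.
Import numFieldNormedType.Exports.

Section Meas.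
Variable R : realType.

Lemma shift_interval (I : set R) (c : R) : is_interval I ->
  is_interval [set x | I (x + c)].
Proof.
move=> HI y1 y2 /= h1 h2 z /andP[z1 z2]; apply: (HI _ _ h1 h2).
apply/andP; split; lra.
Qed.

Lemma frac_shift (x : R) (m : int) : 0 <= x < 1 -> Defs.frac (x + m%:~R) = x.
Proof.
move=> /andP[x0 x1]; rewrite /Defs.frac (@Num.Theory.floor_def _ _ m); first lra.
rewrite intrD; apply/andP; split; lra.
Qed.

Lemma J_meas s (J : set R) : is_M_interval s J -> measurable J.
Proof.
case: s => /=; first by move=> [_ HJ]; exact: is_interval_measurable.
move=> [I [HI ->]].
have -> : (@Defs.frac R) @` I = `[0, 1[ `&` ((\bigcup_n [set x | I (x + n%:R)]) `|`
                                       (\bigcup_n [set x | I (x + (- n%:R))])).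
  apply/seteqP; split.
    move=> x [t It <-]; split; first by rewrite /= in_itv /= frac_itv.
    rewrite /Defs.frac; case: (Num.floor t) => n.
      by left; exists n => //=; rewrite subrK.
    right; exists n.+1 => //=; rewrite NegzE mulrNz opprK.
    by rewrite pmulrn addrK.
  move=> x [/= ]; rewrite in_itv /= => x01 [[n _ /= In]|[n _ /= In]].
    by exists (x + n%:R) => //; rewrite (frac_shift (Posz n) x01).
  exists (x + - n%:R) => //.
  by have := frac_shift (- (Posz n)) x01; rewrite intrN.
apply: measurableI; first exact: measurable_itv.
by apply: measurableU; apply: bigcupT_measurable => n;
  apply: is_interval_measurable; exact: shift_interval.
Qed.

Lemma closure_near (A : set R) (y : R) : closure A y ->
  forall e : R, 0 < e -> exists z, A z /\ `|y - z| < e.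
Proof.
move=> cl e e0; have [z [Az Bz]] := cl _ (@nbhsx_ballx _ _ y e e0).
by exists z; split.
Qed.

Lemma M_meas s : measurable (Mset s : set R).
Proof. by case: s; exact: measurable_itv. Qed.

Lemma Phi_meas s (f : R -> R) del x : cont_self_map s f -> Mset s x ->
  measurable (Phi s f del x).
Proof.
move=> hf Mx.
pose A i := [set y | Mset s y /\ dist s (iter i f y) (iter i f x) <= del].
have -> : Phi s f del x = Mset s `&` \bigcap_i closure (A i).
  apply/seteqP; split.
    move=> y [My Hy]; split => // i _; apply: subset_closure; split => //.
  move=> y [My Hy]; split => // i; apply/ler_addgt0Pr => e e0.
  have [d d0 Hd] := iter_cont hf i My e0.
  have [z [[Mz Hz] yz]] := closure_near (Hy i I) d0.
  have := Hd z Mz (le_lt_trans (dist_le_abs s y z) yz).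
  have := dist_tri (iter_M hf i My) (iter_M hf i Mz) (iter_M hf i Mx).
  lra.
apply: measurableI; first exact: M_meas.
apply: bigcapT_measurable => i; apply: closed_measurable; exact: closed_closure.
Qed.
End Meas.

End Part5.
Import Part5.

Module Part6.
Set Implicit Arguments. Unset Strict Implicit. Unset Printing Implicit Defensive.
Import Order.TTheory GRing.Theory Num.Theory.

Section Main.
Variable R : realType.

Lemma J_sub s (J : set R) : is_M_interval s J -> J `<=` Mset s.
Proof.
case: s => /=; first by move=> [].
by move=> [I [_ ->]] x [t _ <-]; exact: frac_M.
Qed.

Lemma circ_close (c c' eps : R) : 0 <= c' < 1 -> eps <= c -> eps <= 1 - c ->
  dist Circle c c' < eps -> `|c - c'| < eps.
Proof.
move=> /andP[h1 h2] h3 h4; rewrite distCE /Order.min.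
case: (ltP `|c - c'| (1 - `|c - c'|)) => h5 h6;
(have [h|h] := leP 0 (c - c'); [rewrite (ger0_norm h) in h5 h6 *|rewrite (ltr0_norm h) in h5 h6 *]); lra.
Qed.

Lemma grid_interval (f : R -> R) n (J : set R) K :
  cont_self_map Defs.Interval f -> J `<=` `[0, 1] -> is_interval J -> (0 < K)%N ->
  forall a b, J a -> J b -> a <= b -> K%:R^-1 < `|iter n f a - iter n f b| ->
  exists i, (i < K.+1)%N /\ (iter n f @` J) (i%:R / K%:R).
Proof.
move=> hf J01 HJ K0 a b Ja Jb ab big.
have Jab : forall x, x \in `[a, b] -> J x.
  by move=> x; rewrite in_itv /= => xab; exact: (HJ a b).
have M01 : forall y : R, Mset Defs.Interval y -> 0 <= y <= 1.
  by move=> y; rewrite /= in_itv.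
have ed : forall x, `[a, b]%classic x -> forall e, 0 < e -> exists2 d, 0 < d &
     forall y, `[a, b]%classic y -> `|x - y| < d -> `|iter n f x - iter n f y| < e.
  move=> x xab e e0.
  have [d d0 Hd] := iter_cont hf n (J01 _ (Jab _ xab)) e0.
  exists d => // y yab xy; rewrite -distIE; apply: Hd; first exact: J01 (Jab _ yab).
  by rewrite distIE.
have [i [iK [c cab gc]]] := grid_ivt K0 ab (cont_within_ed ed)
  (M01 _ (iter_M hf n (J01 _ Ja))) (M01 _ (iter_M hf n (J01 _ Jb))) big.
by exists i; split => //; exists c => //; exact: Jab.
Qed.

Lemma grid_circle (f : R -> R) n (I : set R) K :
  cont_self_map Circle f -> is_interval I -> (0 < K)%N ->
  (forall t, I t -> iter n f (Defs.frac t) <> 0) ->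
  forall a b, I a -> I b -> a <= b ->
  K%:R^-1 < `|iter n f (Defs.frac a) - iter n f (Defs.frac b)| ->
  exists i, (i < K.+1)%N /\ exists2 c, I c & iter n f (Defs.frac c) = i%:R / K%:R.
Proof.
move=> hf HI K0 gn0 a b Ia Ib ab big.
have Iab : forall x, `[a, b]%classic x -> I x.
  by move=> x; rewrite /= in_itv /= => xab; exact: (HI a b).
have M01 : forall y : R, Mset Circle y -> 0 <= y < 1.
  by move=> y; rewrite /= in_itv.
have ed : forall x, `[a, b]%classic x -> forall e, 0 < e -> exists2 d, 0 < d &
     forall y, `[a, b]%classic y -> `|x - y| < d ->
     `|iter n f (Defs.frac x) - iter n f (Defs.frac y)| < e.
  move=> x xab e e0.
  set c := iter n f (Defs.frac x).
  have /andP[c0 c1] := M01 _ (iter_M hf n (frac_M x)).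
  have cn0 : c != 0 by apply/eqP; exact: gn0 (Iab _ xab).
  have cp : 0 < c by rewrite lt0r cn0.
  pose eps := Num.min e (Num.min c (1 - c)).
  have eps0 : 0 < eps by rewrite !lt_min e0 cp /= subr_gt0.
  have [e1 e2 e3] : [/\ eps <= e, eps <= c & eps <= 1 - c].
    by rewrite /eps !ge_min !lexx /= ?orbT.
  have [d d0 Hd] := iter_cont hf n (frac_M x) eps0.
  exists d => // y yab xy.
  have := Hd _ (frac_M y) (le_lt_trans (dist_frac x y) xy).
  move/(circ_close (M01 _ (iter_M hf n (frac_M y))) e2 e3) => h.
  exact: lt_le_trans h e1.
have Ma : 0 <= iter n f (Defs.frac a) <= 1.
  by case/andP: (M01 _ (iter_M hf n (frac_M a))) => -> /ltW ->.
have Mb : 0 <= iter n f (Defs.frac b) <= 1.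
  by case/andP: (M01 _ (iter_M hf n (frac_M b))) => -> /ltW ->.
have [i [iK [c cab gc]]] := grid_ivt K0 ab (cont_within_ed ed) Ma Mb big.
by exists i; split => //; exists c => //; exact: Iab.
Qed.

Lemma small_eventually s (f : R -> R) (J : set R) :
  cont_self_map s f -> wandering_interval s f J ->
  forall del : R, 0 < del -> exists N, forall n, (N <= n)%N -> forall u v, J u -> J v ->
    dist s (iter n f u) (iter n f v) <= del.
Proof.
move=> hf [HJ [Hdisj _]] del del0.
have di0 : 0 <= del^-1 by rewrite invr_ge0 ltW.
pose K := (Num.truncn del^-1).+1.
have K0 : (0 < K)%N by [].
have Kp : (0 : R) < K%:R by rewrite ltr0n.
have Kdel : K%:R^-1 < del.
  have /andP[_ h] := Num.Theory.truncn_itv di0.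
  by rewrite -[del]invrK ltf_pV2 ?posrE // invr_gt0.
pose P i n := (iter n f @` J) (i%:R / K%:R).
have uniq : forall i n m, (i < K.+1)%N -> P i n -> P i m -> n = m.
  move=> i n m _ Pn Pm; case: (eqVneq n m) => // /eqP nm.
  have := Hdisj n m nm; move/seteqP => [+ _] => /(_ (i%:R / K%:R)) H.
  by exfalso; apply: H.
have [N HN] := fin_bound uniq.
exists N => n Nn u v Ju Jv.
rewrite leNgt; apply/negP => big.
suff [i [iK Pin]] : exists i, (i < K.+1)%N /\ P i n by have := HN _ _ iK Pin; lia.
have big' : K%:R^-1 < `|iter n f u - iter n f v|.
  by apply: lt_trans Kdel _; apply: lt_le_trans big _; exact: dist_le_abs.
destruct s.
  case: HJ => J01 HJi.
  have [uv|vu] := leP u v.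
    exact: (@grid_interval f n J K hf J01 HJi K0 u v Ju Jv uv big').
  by apply: (@grid_interval f n J K hf J01 HJi K0 v u Jv Ju (ltW vu)); rewrite distrC.
case: HJ => I [HI EJ].
have [//|nP] := pselect (exists i, (i < K.+1)%N /\ P i n).
exfalso.
have gn0 : forall t, I t -> iter n f (Defs.frac t) <> 0.
  move=> t It h; apply: nP; exists 0%N; split => //; rewrite /P EJ mul0r.
  by exists (Defs.frac t) => //; exists t.
rewrite EJ in Ju Jv; case: Ju => u0 Iu0 Eu; case: Jv => v0 Iv0 Ev; subst u v.
have [uv|vu] := leP u0 v0.
  have [i [iK [c Ic gc]]] := @grid_circle f n I K hf HI K0 gn0 u0 v0 Iu0 Iv0 uv big'.
  by apply: nP; exists i; split => //; rewrite /P EJ; exists (Defs.frac c) => //; exists c.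
have [i [iK [c Ic gc]]] := @grid_circle f n I K hf HI K0 gn0 v0 u0 Iv0 Iu0 (ltW vu) ltac:(by rewrite distrC).
by apply: nP; exists i; split => //; rewrite /P EJ; exists (Defs.frac c) => //; exists c.
Qed.
End Main.

End Part6.
Import Part6.

Module Part7.
Set Implicit Arguments. Unset Strict Implicit. Unset Printing Implicit Defensive.
Import Order.TTheory GRing.Theory Num.Theory.

Lemma fin_cont (R : realType) s (f : R -> R) (N : nat) (x : R) :
  cont_self_map s f -> Mset s x -> forall e : R, 0 < e -> exists2 d : R, 0 < d &
  forall i, (i < N)%N -> forall y, Mset s y -> dist s x y < d ->
    dist s (iter i f x) (iter i f y) < e.
Proof.
move=> hf Mx e e0; elim: N => [|N [d1 d10 H1]]; first by exists 1.
have [d2 d20 H2] := iter_cont hf N Mx e0.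
exists (Num.min d1 d2); first by rewrite lt_min d10 d20.
move=> i iN y My; rewrite lt_min => /andP[y1 y2].
have [iN'|->] : (i < N)%N \/ i = N by lia.
  exact: H1.
exact: H2.
Qed.


End Part7.
Import Part7.

Import Order.TTheory GRing.Theory Num.Theory.
Theorem lemma4p11 (R : realType) (s : phase_space) (f : R -> R) :
  cont_self_map s f ->
  forall J : set R, wandering_interval s f J ->
  forall mu : probability R R, prob_on s mu -> expansive_measure s f mu ->
  mu J = 0%E.
Proof.
move=> hf J HW mu _ [del del0 Hphi].
have HJ := HW.1.
have JM := J_sub HJ; have mJ := J_meas HJ.
have [N HN] := small_eventually hf HW del0.
apply: (loc_null mJ) => x Jx.
have Mx := JM x Jx.
have [d d0 Hd] := fin_cont N hf Mx del0.
exists d => //.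
apply: (subset_measure0 _ _ _ (Hphi x Mx)).
- exact: measurableI mJ (sball_meas _ _).
- exact: Phi_meas hf Mx.
move=> y [Jy xy]; split; first exact: JM.
move=> i; case: (ltnP i N) => iN.
  rewrite distC; apply: ltW; apply: (Hd i iN y (JM y Jy)).
  exact: le_lt_trans (dist_le_abs s x y) xy.
exact: HN i iN y x Jy Jx.
Qed.
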